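(* Let $b\ge2$, $k\in\mathbb{N}$, let $A$ be a nonempty subset of $\{0,1,\ldots,k\}$, and let $f\in\mathcal{M}^b$ have set-array representation $(A,\emptyset,\ldots,\emptyset)$. Then $d(f)\le d([k]_b)$, and the inequality is strict for $f\neq[k]_b$.
   Context: $\mathbb{N}=\{0,1,\ldots\}$, $[k]=\{0,\ldots,k\}$. $\mathcal{M}^b$ is the set of finitely supported functions $f:\mathbb{N}\to\{0,\ldots,b\}$ (finite multisets with multiplicities at most $b$); its set-array representation is $(A_1,\ldots,A_b)$ with $A_i=\{a:f(a)\ge i\}$. Multiset addition is coordinatewise on set arrays: $(A_i)_i+(B_i)_i=(A_i+B_i)_i$ with $S+T=\{s+t:s\in S,t\in T\}$ and $S+\emptyset=\emptyset$. $g$ is a divisor of $f$ if $f=g+h$ for some $h\in\mathcal{M}^b$; $d(f)$ is the number of divisors of $f$. $[k]_b$ is the multiset with set-array representation $([k],\emptyset,\ldots,\emptyset)$. *)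

(* Defs.v *)
From Stdlib Require Import Arith List Lia.
Import ListNotations.

(* A multiset in M^b: finitely supported f : nat -> {0,...,b}. *)
Definition inMb (b : nat) (f : nat -> nat) : Prop :=
  (forall a, f a <= b) /\ exists N, forall a, N <= a -> f a = 0.

(* The i-th set of the set-array representation: A_i = {a | f a >= i}. *)
Definition level (f : nat -> nat) (i : nat) : nat -> Prop :=
  fun a => i <= f a.

Definition sumset (S T : nat -> Prop) : nat -> Prop :=
  fun a => exists s t, S s /\ T t /\ a = s + t.

(* f = g + h in M^b: coordinatewise sum of the set arrays (A_1..A_b). *)
Definition is_msum (b : nat) (g h f : nat -> nat) : Prop :=
  forall i, 1 <= i <= b ->
    forall a, level f i a <-> sumset (level g i) (level h i) a.

Definition mdivisor (b : nat) (g f : nat -> nat) : Prop :=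
  inMb b g /\ exists h, inMb b h /\ is_msum b g h f.

Definition card_is (P : (nat -> nat) -> Prop) (n : nat) : Prop :=
  exists l : list (nat -> nat), NoDup l /\ length l = n /\
    forall g, P g <-> In g l.

Definition num_divisors_is (b : nat) (f : nat -> nat) (n : nat) : Prop :=
  card_is (fun g => mdivisor b g f) n.

(* [k]_b : set-array representation ([k], empty, ..., empty). *)
Definition intvl_b (k : nat) : nat -> nat :=
  fun a => if a <=? k then 1 else 0.

(* Main.v *)
Require Import Defs.
From Stdlib Require Import Arith List Lia.
From Stdlib Require Import Classical ClassicalEpsilon FunctionalExtensionality.
Import ListNotations.

Definition cardT {T} (P : T -> Prop) (n : nat) : Prop :=
  exists l : list T, NoDup l /\ length l = n /\ forall g, P g <-> In g l.

Lemma NoDup_map_inj {T U} (phi : T -> U) l :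
  NoDup l -> (forall x y, In x l -> In y l -> phi x = phi y -> x = y) ->
  NoDup (map phi l).
Proof.
  induction l as [|a l IH]; simpl; intros Hn Hi. constructor.
  inversion Hn; subst. constructor.
  - intro Hin. apply in_map_iff in Hin as [y [Hy Hiny]].
    assert (y = a) by (apply Hi; auto). subst; contradiction.
  - apply IH; auto.
Qed.

Lemma inj_le {T U} (P : T -> Prop) (Q : U -> Prop) n m (phi : T -> U) :
  cardT P n -> cardT Q m -> (forall x, P x -> Q (phi x)) ->
  (forall x y, P x -> P y -> phi x = phi y -> x = y) -> n <= m.
Proof.
  intros [lP [ndP [lenP HP]]] [lQ [ndQ [lenQ HQ]]] HPQ Hinj. subst.
  rewrite <- (length_map phi lP). apply NoDup_incl_length.
  - apply NoDup_map_inj; auto. intros x y Hx Hy; apply Hinj; apply HP; auto.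
  - intros y Hy. apply in_map_iff in Hy as [x [<- Hx]]. apply HQ, HPQ, HP, Hx.
Qed.

Lemma inj_lt {T U} (P : T -> Prop) (Q : U -> Prop) n m (phi : T -> U) :
  cardT P n -> cardT Q m -> (forall x, P x -> Q (phi x)) ->
  (forall x y, P x -> P y -> phi x = phi y -> x = y) ->
  (exists y, Q y /\ forall x, P x -> phi x <> y) -> n < m.
Proof.
  intros [lP [ndP [lenP HP]]] [lQ [ndQ [lenQ HQ]]] HPQ Hinj [y [Qy Hy]]. subst.
  change (S (length lP) <= length lQ).
  rewrite <- (length_map phi lP). change (length (y :: map phi lP) <= length lQ).
  apply NoDup_incl_length.
  - constructor.
    + intro Hin. apply in_map_iff in Hin as [x [Hx Hinx]]. apply (Hy x); auto. apply HP; auto.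
    + apply NoDup_map_inj; auto. intros x z Hx Hz; apply Hinj; apply HP; auto.
  - intros z Hz. destruct Hz as [<-|Hz]. apply HQ; auto.
    apply in_map_iff in Hz as [x [<- Hx]]. apply HQ, HPQ, HP, Hx.
Qed.

Lemma cardT_pair {T} (P : T -> Prop) n :
  cardT P n -> cardT (fun p : T * bool => P (fst p)) (2 * n).
Proof.
  intros [l [nd [len HP]]]. subst.
  exists (map (fun x => (x, true)) l ++ map (fun x => (x, false)) l). split; [|split].
  - apply NoDup_app.
    + apply NoDup_map_inj; auto. intros x y _ _ H; inversion H; auto.
    + apply NoDup_map_inj; auto. intros x y _ _ H; inversion H; auto.
    + intros a Ha Hb. apply in_map_iff in Ha as [x [<- _]].
      apply in_map_iff in Hb as [y [Hy _]]. inversion Hy.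
  - rewrite length_app, !length_map. lia.
  - intros [g t]. simpl. rewrite in_app_iff, !in_map_iff. split.
    + intros Hg. destruct t; [left|right]; exists g; split; auto; apply HP; auto.
    + intros [[x [Hx Hin]]|[x [Hx Hin]]]; inversion Hx; subst; apply HP; auto.
Qed.

Lemma filter_classic {T} (P : T -> Prop) (l : list T) :
  exists l', NoDup l' /\ forall x, In x l' <-> (P x /\ In x l).
Proof.
  induction l as [|a l [l' [nd H]]].
  - exists []. split. constructor. simpl; tauto.
  - destruct (classic (P a /\ ~ In a l')) as [Ha|Ha].
    + exists (a :: l'). split. constructor; tauto. intros x; simpl; rewrite H.
      split. intros [<-|Hx]; tauto. intros [Px [<-|Hx]]; tauto.
    + exists l'. split; auto. intros x; simpl; rewrite H. split. tauto.
      intros [Px [<-|Hx]]; [|tauto]. destruct (classic (In a l')) as [Hi|Hi].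
      apply H in Hi; tauto. exfalso; tauto.
Qed.

Lemma card_exists {T} (P : T -> Prop) (l : list T) :
  (forall x, P x -> In x l) -> exists n, cardT P n.
Proof.
  intros Hl. destruct (filter_classic P l) as [l' [nd H]].
  exists (length l'), l'. split; auto. split; auto. intros g. rewrite H. firstorder.
Qed.

Fixpoint U (b n : nat) : list (nat -> nat) :=
  match n with
  | 0 => [fun _ => 0]
  | S n' => flat_map (fun g => map (fun v => fun a => if a =? n' then v else g a) (seq 0 (S b))) (U b n')
  end.

Lemma U_complete b n : forall g, (forall a, g a <= b) -> (forall a, n <= a -> g a = 0) -> In g (U b n).
Proof.
  induction n as [|n IH]; intros g Hb Hz; cbn [U].
  - left. apply functional_extensionality; intro a; symmetry; apply Hz; lia.
  - apply in_flat_map. exists (fun a => if a =? n then 0 else g a). split.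
    + apply IH. intros a; destruct (a =? n); auto; lia.
      intros a Ha. destruct (Nat.eqb_spec a n); auto. apply Hz; lia.
    + apply in_map_iff. exists (g n). split.
      * apply functional_extensionality; intro a. destruct (Nat.eqb_spec a n); subst; auto.
      * apply in_seq. specialize (Hb n). lia.
Qed.

Definition Sum1 (g h f : nat -> nat) : Prop :=
  forall a, 1 <= f a <-> exists s t, 1 <= g s /\ 1 <= h t /\ a = s + t.

Lemma div_char b f g : 1 <= b -> (forall a, f a <= 1) ->
  (mdivisor b g f <-> inMb b g /\ exists h, inMb b h /\ Sum1 g h f).
Proof.
  intros Hb Hf. split.
  - intros [Hg [h [Hh Hs]]]. split; auto. exists h. split; auto. intro a.
    exact (Hs 1 (conj (le_n 1) Hb) a).
  - intros [Hg [h [Hh Hs]]]. split; auto. exists (fun t => min (h t) 1). split.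
    + destruct Hh as [_ [N HN]]. split. intro; lia. exists N; intros a Ha; rewrite HN; auto.
    + intros i Hi a. unfold level, sumset. destruct (Nat.eq_dec i 1) as [->|Hi1].
      * rewrite (Hs a). split; intros [s [t [H1 [H2 H3]]]]; exists s, t; repeat split; auto; lia.
      * split; intro H. specialize (Hf a); lia. destruct H as [s [t [_ [Ht _]]]]. lia.
Qed.

Lemma supp_bound b f g k : 1 <= b -> (forall a, f a <= 1) -> (forall a, 1 <= f a -> a <= k) ->
  (exists a, 1 <= f a) -> mdivisor b g f -> forall a, 1 <= g a -> a <= k.
Proof.
  intros Hb Hf Hk [a0 Ha0] Hg a Ha.
  destruct (proj1 (div_char b f g Hb Hf) Hg) as [_ [h [_ Hs]]].
  apply Hs in Ha0 as [s [t [_ [Ht _]]]].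
  assert (1 <= f (a + t)) by (apply Hs; exists a, t; auto). apply Hk in H. lia.
Qed.

Lemma div_exists_card b f k : 1 <= b -> (forall a, f a <= 1) -> (forall a, 1 <= f a -> a <= k) ->
  (exists a, 1 <= f a) -> exists n, num_divisors_is b f n.
Proof.
  intros Hb Hf Hk Hne.
  destruct (card_exists (fun g => mdivisor b g f) (U b (S k))) as [n Hn].
  - intros g Hg. apply U_complete.
    + destruct Hg as [[Hgb _] _]; auto.
    + intros a Ha. destruct (Nat.eq_dec (g a) 0); auto. exfalso.
      assert (a <= k) by (apply (supp_bound b f g k); auto; lia). lia.
  - exists n; exact Hn.
Qed.

Lemma intvl_ge1 k a : 1 <= intvl_b k a <-> a <= k.
Proof. unfold intvl_b. destruct (Nat.leb_spec a k); split; intros; lia. Qed.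

Lemma intvl_le1 k a : intvl_b k a <= 1.
Proof. unfold intvl_b. destruct (a <=? k); lia. Qed.

Lemma crit_div b k G : 1 <= b -> (forall a, G a <= b) -> (forall a, 1 <= G a -> a <= k) ->
  (forall x, x <= k -> exists s, 1 <= G s /\ s <= x /\ forall s2, 1 <= G s2 -> s2 + (x - s) <= k) ->
  mdivisor b G (intvl_b k).
Proof.
  intros Hb HG Hs Hc. apply div_char; auto using intvl_le1. split.
  - split; auto. exists (S k). intros a Ha. destruct (Nat.eq_dec (G a) 0); auto.
    assert (a <= k) by (apply Hs; lia). lia.
  - exists (fun t => if excluded_middle_informative (t <= k /\ forall s2, 1 <= G s2 -> s2 + t <= k) then 1 else 0).
    split.
    + split. intro t; destruct excluded_middle_informative; lia.
      exists (S k). intros t Ht. destruct excluded_middle_informative as [[H1 _]|]; auto; lia.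
    + intro a. rewrite intvl_ge1. split.
      * intro Ha. destruct (Hc a Ha) as [s [Gs [sa Hall]]]. exists s, (a - s).
        split; auto. split; [|lia].
        destruct excluded_middle_informative as [_|n]; [lia|exfalso; apply n; split; [lia|auto]].
      * intros [s [t [Gs [Ht ->]]]].
        destruct excluded_middle_informative as [[_ H2]|_]; [|lia]. apply H2; auto.
Qed.

Fixpoint lst (g : nat -> nat) (n : nat) : nat :=
  match n with 0 => 0 | S n' => if 1 <=? g (S n') then S n' else lst g n' end.

Lemma lst_le g n : lst g n <= n.
Proof. induction n; cbn [lst]. lia. destruct (1 <=? g (S n)); lia. Qed.

Lemma lst_pos g n : 1 <= g 0 -> 1 <= g (lst g n).
Proof. induction n; cbn [lst]; auto. destruct (Nat.leb_spec 1 (g (S n))); auto. Qed.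

Lemma lst_max g n a : 1 <= g a -> a <= n -> a <= lst g n.
Proof.
  induction n; cbn [lst]; intros H1 H2. lia.
  destruct (Nat.leb_spec 1 (g (S n))). lia.
  destruct (Nat.eq_dec a (S n)). subst; lia. apply IHn; auto; lia.
Qed.

Lemma intvl_div_facts b k g : 1 <= b -> mdivisor b g (intvl_b k) ->
  (forall a, g a <= b) /\ 1 <= g 0 /\ (forall a, 1 <= g a -> a <= k) /\
  exists h, Sum1 g h (intvl_b k).
Proof.
  intros Hb Hg.
  assert (Hs : forall a, 1 <= g a -> a <= k).
  { apply (supp_bound b (intvl_b k) g k); auto using intvl_le1.
    intros a; apply intvl_ge1. exists 0; apply intvl_ge1; lia. }
  destruct (proj1 (div_char b _ g Hb (intvl_le1 k)) Hg) as [[Hgb _] [h [_ Hsum]]].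
  split; auto. split; [|split; auto; exists h; auto].
  destruct (proj1 (Hsum 0)) as [s [t [Gs [Ht E]]]]. apply intvl_ge1; lia.
  assert (s = 0) by lia. subst; auto.
Qed.

Definition ext (g : nat -> nat) (k : nat) (t : bool) : nat -> nat :=
  fun a => if a =? S (lst g k) then (if t then 1 else 2) else g a.

Lemma dbl b k m1 m2 : 2 <= b -> num_divisors_is b (intvl_b k) m1 ->
  num_divisors_is b (intvl_b (S k)) m2 -> 2 * m1 < m2.
Proof.
  intros Hb H1 H2.
  apply (inj_lt (fun p : (nat -> nat) * bool => mdivisor b (fst p) (intvl_b k))
                (fun g => mdivisor b g (intvl_b (S k))) (2 * m1) m2
                (fun p => ext (fst p) k (snd p))).
  - apply (cardT_pair (fun g => mdivisor b g (intvl_b k))). exact H1.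
  - exact H2.
  - intros [g t] Hg. simpl in *.
    destruct (intvl_div_facts b k g ltac:(lia) Hg) as [Hgb [Hg0 [Hs [h Hsum]]]].
    set (u := lst g k).
    assert (Hu1 : 1 <= g u) by (apply lst_pos; auto).
    assert (Hum : forall a, 1 <= g a -> a <= u) by (intros a Ha; apply lst_max; auto).
    assert (Huk : u <= k) by (apply lst_le).
    assert (Hsk : forall s t, 1 <= g s -> 1 <= h t -> s + t <= k).
    { intros s t' Hs' Ht'. apply intvl_ge1, Hsum. exists s, t'; auto. }
    unfold ext; fold u.
    apply crit_div; [lia| | |].
    + intro a. destruct (a =? S u); [destruct t|]; auto; lia.
    + intro a. destruct (Nat.eqb_spec a (S u)); [lia|]. auto.
    + intros x Hx. destruct (le_lt_dec (S u) x).
      * exists (S u). rewrite Nat.eqb_refl. split; [destruct t; lia|]. split; [lia|].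
        intros s2 Hs2. destruct (Nat.eqb_spec s2 (S u)); [lia|]. apply Hum in Hs2. lia.
      * destruct (proj1 (Hsum x)) as [s [tau [Gs [Ht E]]]]. apply intvl_ge1; lia.
        exists s. destruct (Nat.eqb_spec s (S u)); [lia|]. split; auto. split; [lia|].
        intros s2 Hs2. destruct (Nat.eqb_spec s2 (S u)).
        -- specialize (Hsk u tau Hu1 Ht). lia.
        -- specialize (Hsk s2 tau Hs2 Ht). lia.
  - intros [g1 t1] [g2 t2] Hg1 Hg2 E. simpl in *.
    destruct (intvl_div_facts b k g1 ltac:(lia) Hg1) as [_ [Hg10 [Hs1 _]]].
    destruct (intvl_div_facts b k g2 ltac:(lia) Hg2) as [_ [Hg20 [Hs2 _]]].
    unfold ext in E.
    set (u1 := lst g1 k) in *. set (u2 := lst g2 k) in *.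
    assert (Hu1 : 1 <= g1 u1) by (apply lst_pos; auto).
    assert (Hum1 : forall a, 1 <= g1 a -> a <= u1) by (intros a Ha; apply lst_max; auto).
    assert (Hu2 : 1 <= g2 u2) by (apply lst_pos; auto).
    assert (Hum2 : forall a, 1 <= g2 a -> a <= u2) by (intros a Ha; apply lst_max; auto).
    assert (Eq : u1 = u2).
    { destruct (Nat.lt_trichotomy u1 u2) as [Hl|[Hl|Hl]]; auto; exfalso.
      - pose proof (equal_f E (S u2)) as E2. cbv beta in E2. rewrite Nat.eqb_refl in E2.
        destruct (Nat.eqb_spec (S u2) (S u1)); [lia|].
        assert (1 <= g1 (S u2)) by (rewrite E2; destruct t2; lia). apply Hum1 in H. lia.
      - pose proof (equal_f E (S u1)) as E2. cbv beta in E2. rewrite Nat.eqb_refl in E2.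
        destruct (Nat.eqb_spec (S u1) (S u2)); [lia|].
        assert (1 <= g2 (S u1)) by (rewrite <- E2; destruct t1; lia). apply Hum2 in H. lia. }
    rewrite <- Eq in E.
    assert (t1 = t2).
    { pose proof (equal_f E (S u1)) as E2. cbv beta in E2. rewrite Nat.eqb_refl in E2.
      destruct t1, t2; auto; discriminate. }
    subst t2. f_equal. apply functional_extensionality; intro a.
    pose proof (equal_f E a) as E2. cbv beta in E2.
    destruct (Nat.eqb_spec a (S u1)); auto. subst a.
    destruct (Nat.eq_dec (g1 (S u1)) 0) as [Z1|Z1]; [|assert (S u1 <= u1) by (apply Hum1; lia); lia].
    destruct (Nat.eq_dec (g2 (S u1)) 0) as [Z2|Z2]; [|assert (S u1 <= u2) by (apply Hum2; lia); lia].
    lia.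
  - exists (fun a => if a =? 0 then 1 else 0). split.
    + apply crit_div; [lia| | |].
      * intro a; destruct (a =? 0); lia.
      * intro a; destruct (Nat.eqb_spec a 0); lia.
      * intros x Hx. exists 0. split; [simpl; lia|]. split; [lia|].
        intros s2 Hs2. destruct (Nat.eqb_spec s2 0); lia.
    + intros [g t] Hg E. simpl in *.
      pose proof (equal_f E (S (lst g k))) as E2. unfold ext in E2. rewrite Nat.eqb_refl in E2.
      simpl in E2. destruct t; discriminate.
Qed.

Lemma shift b f n n' : 2 <= b -> (forall a, f a <= 1) -> f 0 = 0 ->
  num_divisors_is b f n -> num_divisors_is b (fun a => f (S a)) n' -> n <= 2 * n'.
Proof.
  intros Hb Hf Hf0 Hn Hn'.
  apply (inj_le (fun g => mdivisor b g f)
                (fun p : (nat -> nat) * bool => mdivisor b (fst p) (fun a => f (S a))) n (2 * n')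
                (fun g => if 1 <=? g 0 then (g, true) else (fun a => g (S a), false))).
  - exact Hn.
  - apply (cardT_pair (fun g => mdivisor b g (fun a => f (S a)))). exact Hn'.
  - intros g Hg.
    destruct (proj1 (div_char b f g ltac:(lia) Hf) Hg) as [[Hgb [N HN]] [h [[Hhb [M HM]] Hs]]].
    destruct (Nat.leb_spec 1 (g 0)); simpl; apply div_char; auto; try lia.
    + split. split; eauto. exists (fun t => h (S t)). split.
      * split; auto. exists M; intros; apply HM; lia.
      * intro a. rewrite (Hs (S a)). split.
        -- intros [s [t [Gs [Ht E]]]]. destruct t as [|t].
           ++ exfalso. assert (1 <= f 0) by (apply Hs; exists 0, 0; repeat split; auto; lia). lia.
           ++ exists s, t. repeat split; auto. lia.
        -- intros [s [t [Gs [Ht E]]]]. exists s, (S t). repeat split; auto. lia.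
    + split. split; auto. exists N; intros; apply HN; lia.
      exists h. split. split; eauto.
      intro a. rewrite (Hs (S a)). split.
      -- intros [s [t [Gs [Ht E]]]]. destruct s as [|s]; [lia|].
         exists s, t. repeat split; auto.
      -- intros [s [t [Gs [Ht E]]]]. exists (S s), t. repeat split; auto. lia.
  - intros g1 g2 H1 H2 E.
    destruct (Nat.leb_spec 1 (g1 0)) as [L1|L1], (Nat.leb_spec 1 (g2 0)) as [L2|L2];
      inversion E as [EE]; auto.
    apply functional_extensionality; intros [|a]. lia. exact (equal_f EE a).
Qed.

Lemma filter_seq_incr (p : nat -> bool) n : forall s i j,
  i < j < length (filter p (seq s n)) ->
  nth i (filter p (seq s n)) 0 < nth j (filter p (seq s n)) 0.
Proof.
  induction n as [|n IH]; intros s i j H. simpl in H; lia.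
  cbn [seq filter] in *. destruct (p s) eqn:E.
  - destruct i as [|i], j as [|j]; cbn [length nth] in *; try lia.
    + assert (Hin : In (nth j (filter p (seq (S s) n)) 0) (filter p (seq (S s) n)))
        by (apply nth_In; lia).
      apply filter_In in Hin as [Hin _]. apply in_seq in Hin. lia.
    + apply IH; lia.
  - apply IH; auto.
Qed.

Lemma filter_len_le (p : nat -> bool) l : length (filter p l) <= length l.
Proof. induction l; simpl; auto. destruct (p a); simpl; lia. Qed.

Lemma filter_seq_full (p : nat -> bool) n : forall s,
  length (filter p (seq s n)) = n -> forall x, s <= x < s + n -> p x = true.
Proof.
  induction n as [|n IH]; intros s H x Hx. lia.
  cbn [seq filter] in H. destruct (p s) eqn:E.
  - simpl in H. destruct (Nat.eq_dec x s). subst; auto. apply (IH (S s)); lia.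
  - pose proof (filter_len_le p (seq (S s) n)). rewrite length_seq in H0. lia.
Qed.

Lemma rank_main b k f n m : 2 <= b -> (forall a, f a <= 1) -> (forall a, 1 <= f a -> a <= k) ->
  1 <= f 0 -> num_divisors_is b f n -> num_divisors_is b (intvl_b k) m ->
  n <= m /\ (f <> intvl_b k -> n < m).
Proof.
  intros Hb Hf Hk Hf0 Hn Hm.
  set (L := filter (fun a => 1 <=? f a) (seq 0 (S k))).
  set (len := length L).
  set (sel := fun i => nth i L 0).
  assert (F1 : forall i, i < len -> 1 <= f (sel i)).
  { intros i Hi. assert (Hin : In (sel i) L) by (apply nth_In; auto).
    apply filter_In in Hin as [_ Hin]. apply Nat.leb_le; auto. }
  assert (F2 : forall a, 1 <= f a -> exists i, i < len /\ sel i = a).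
  { intros a Ha. assert (Hin : In a L).
    { apply filter_In. split. apply in_seq. specialize (Hk a Ha). lia. apply Nat.leb_le; auto. }
    apply (In_nth L a 0) in Hin as [i [Hi E]]. exists i; auto. }
  assert (Finc : forall i j, i < j < len -> sel i < sel j).
  { intros i j H. apply filter_seq_incr; auto. }
  assert (F3 : forall i j, i <= j < len -> sel i + (j - i) <= sel j).
  { intros i j H. induction j as [|j IHj]. replace i with 0 by lia. lia.
    destruct (Nat.eq_dec i (S j)). subst. lia.
    specialize (IHj ltac:(lia)). specialize (Finc j (S j) ltac:(lia)). lia. }
  assert (F3' : forall i j, i < len -> j < len -> sel i <= sel j -> i <= j).
  { intros i j Hi Hj H. destruct (le_lt_dec i j); auto. specialize (Finc j i ltac:(lia)). lia. }
  assert (F4 : len <= S k).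
  { unfold len, L. pose proof (filter_len_le (fun a => 1 <=? f a) (seq 0 (S k))).
    rewrite length_seq in H. lia. }
  assert (F5 : len = S k -> forall a, a <= k -> 1 <= f a).
  { intros H a Ha. apply Nat.leb_le. apply (filter_seq_full (fun a => 1 <=? f a) (S k) 0 H a); lia. }
  assert (Fsel0 : 0 < len /\ sel 0 = 0).
  { unfold len, sel, L. cbn [seq filter].
    destruct (Nat.leb_spec 1 (f 0)); [|lia]. simpl. split; auto; lia. }
  assert (Hb1 : 1 <= b) by lia.
  set (phi := fun (g : nat -> nat) i => if i <? len then g (sel i) else 0).
  assert (Gfacts : forall g, mdivisor b g f ->
     (forall a, g a <= b) /\ 1 <= g 0 /\ (forall a, 1 <= g a -> 1 <= f a) /\
     exists h, Sum1 g h f /\ (forall s t, 1 <= g s -> 1 <= h t -> s + t <= k)).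
  { intros g Hg. destruct (proj1 (div_char b f g Hb1 Hf) Hg) as [[Hgb _] [h [_ Hs]]].
    destruct (proj1 (Hs 0) Hf0) as [s [t [Gs [Ht E]]]].
    assert (s = 0 /\ t = 0) as [-> ->] by lia.
    split; auto. split; auto. split.
    - intros a Ha. apply Hs. exists a, 0. repeat split; auto; lia.
    - exists h. split; auto. intros s' t' H1 H2. apply Hk, Hs. exists s', t'; auto. }
  assert (Hval : forall g, mdivisor b g f -> mdivisor b (phi g) (intvl_b k)).
  { intros g Hg. destruct (Gfacts g Hg) as [Hgb [Hg0 [HgA [h [Hs Hsk]]]]].
    assert (Hp0 : 1 <= phi g 0).
    { unfold phi. destruct Fsel0 as [H1 H2]. apply Nat.ltb_lt in H1. rewrite H1, H2; auto. }
    assert (Hplen : forall i, 1 <= phi g i -> i < len /\ 1 <= g (sel i)).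
    { intros i Hi. unfold phi in Hi. destruct (Nat.ltb_spec i len); [auto|lia]. }
    assert (Hpk : forall i, 1 <= phi g i -> i <= k).
    { intros i Hi. apply Hplen in Hi. lia. }
    apply crit_div; auto.
    - intro a. unfold phi. destruct (a <? len); auto; lia.
    - intros x Hx.
      set (j0 := lst (phi g) k).
      assert (Hj1 : 1 <= phi g j0) by (apply lst_pos; auto).
      assert (Hjm : forall a, 1 <= phi g a -> a <= j0) by (intros a Ha; apply lst_max; auto).
      destruct (le_lt_dec j0 x).
      + exists j0. split; auto. split; auto. intros s2 Hs2. apply Hjm in Hs2. lia.
      + assert (Hj0 : j0 < len) by (apply Hplen in Hj1; tauto).
        destruct (proj1 (Hs (sel x)) (F1 x ltac:(lia))) as [sg [tau [Gs [Ht E]]]].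
        destruct (F2 sg (HgA sg Gs)) as [i1 [Hi1 Esel]].
        assert (Hi1x : i1 <= x) by (apply F3'; lia).
        exists i1. split.
        { unfold phi. apply Nat.ltb_lt in Hi1. rewrite Hi1, Esel; auto. }
        split; auto. intros s2 Hs2. apply Hplen in Hs2 as [Hs2l Hs2g].
        pose proof (F3 i1 x ltac:(lia)) as F3a. specialize (Hsk _ _ Hs2g Ht).
        pose proof (F3 0 s2 ltac:(lia)) as F30. destruct Fsel0 as [_ Hz].
        rewrite Hz in F30. lia. }
  assert (Hinj : forall g1 g2, mdivisor b g1 f -> mdivisor b g2 f -> phi g1 = phi g2 -> g1 = g2).
  { intros g1 g2 H1 H2 E. destruct (Gfacts g1 H1) as [_ [_ [HA1 _]]].
    destruct (Gfacts g2 H2) as [_ [_ [HA2 _]]].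
    apply functional_extensionality; intro a. destruct (le_lt_dec 1 (f a)) as [Ha|Ha].
    - destruct (F2 a Ha) as [i [Hi <-]]. pose proof (equal_f E i) as Ei. unfold phi in Ei.
      apply Nat.ltb_lt in Hi. rewrite Hi in Ei. auto.
    - destruct (Nat.eq_dec (g1 a) 0); [|specialize (HA1 a ltac:(lia)); lia].
      destruct (Nat.eq_dec (g2 a) 0); [|specialize (HA2 a ltac:(lia)); lia]. lia. }
  split.
  - apply (inj_le (fun g => mdivisor b g f) (fun g => mdivisor b g (intvl_b k)) n m phi); auto.
  - intros Hne.
    apply (inj_lt (fun g => mdivisor b g f) (fun g => mdivisor b g (intvl_b k)) n m phi); auto.
    exists (intvl_b k). split.
    + apply crit_div; [lia| |intros a Ha; apply intvl_ge1; auto|].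
      * intro a. pose proof (intvl_le1 k a). lia.
      * intros x Hx. exists x. split. apply intvl_ge1; auto. split; auto.
        intros s2 Hs2. apply (proj1 (intvl_ge1 k s2)) in Hs2. lia.
    + intros g Hg E. apply Hne.
      pose proof (equal_f E k) as Ek. unfold phi in Ek.
      assert (Hkk : intvl_b k k = 1) by (unfold intvl_b; rewrite Nat.leb_refl; auto).
      rewrite Hkk in Ek. destruct (Nat.ltb_spec k len); [|lia].
      assert (Hfull : len = S k) by lia.
      apply functional_extensionality; intro a. unfold intvl_b.
      destruct (Nat.leb_spec a k).
      -- specialize (F5 Hfull a H0). specialize (Hf a). lia.
      -- destruct (Nat.eq_dec (f a) 0); auto. specialize (Hk a ltac:(lia)). lia.
Qed.

Lemma key b k : 2 <= b -> forall f, (forall a, f a <= 1) -> (forall a, 1 <= f a -> a <= k) ->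
  (exists a, 1 <= f a) -> forall n m, num_divisors_is b f n -> num_divisors_is b (intvl_b k) m ->
  n <= m /\ (f <> intvl_b k -> n < m).
Proof.
  intros Hb. induction k as [|k IH]; intros f Hf1 Hsupp Hne n m Hn Hm.
  - destruct (le_lt_dec 1 (f 0)). apply (rank_main b); auto.
    destruct Hne as [a Ha]. specialize (Hsupp a Ha). assert (a = 0) by lia. subst; lia.
  - destruct (le_lt_dec 1 (f 0)). apply (rank_main b); auto.
    assert (Hf0 : f 0 = 0) by (specialize (Hf1 0); lia).
    set (f' := fun a => f (S a)).
    assert (Hf'1 : forall a, f' a <= 1) by (intro; apply Hf1).
    assert (Hf's : forall a, 1 <= f' a -> a <= k) by (intros a Ha; apply Hsupp in Ha; lia).
    assert (Hf'n : exists a, 1 <= f' a).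
    { destruct Hne as [[|a] Ha]. lia. exists a; auto. }
    destruct (div_exists_card b f' k ltac:(lia) Hf'1 Hf's Hf'n) as [n' Hn'].
    destruct (div_exists_card b (intvl_b k) k ltac:(lia) (intvl_le1 k))
      as [m' Hm'].
    { intros a; apply intvl_ge1. }
    { exists 0; apply intvl_ge1; lia. }
    destruct (IH f' Hf'1 Hf's Hf'n n' m' Hn' Hm') as [Hle _].
    pose proof (shift b f n n' Hb Hf1 Hf0 Hn Hn').
    pose proof (dbl b k m' m Hb Hm' Hm).
    split; [lia|intros; lia].
Qed.

Theorem mainTheorem13 (b k : nat) (f : nat -> nat) :
  2 <= b ->
  (* f has set-array representation (A, empty, ..., empty) *)
  (forall a, f a <= 1) ->
  (* A = {a | f a >= 1} is a subset of {0,...,k} *)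
  (forall a, 1 <= f a -> a <= k) ->
  (* A is nonempty *)
  (exists a, 1 <= f a) ->
  exists n m : nat,
    num_divisors_is b f n /\ num_divisors_is b (intvl_b k) m /\
    n <= m /\ (f <> intvl_b k -> n < m).
Proof.
  intros Hb Hf Hs Hne.
  destruct (div_exists_card b f k ltac:(lia) Hf Hs Hne) as [n Hn].
  destruct (div_exists_card b (intvl_b k) k ltac:(lia) (intvl_le1 k)) as [m Hm].
  { intros a; apply intvl_ge1. }
  { exists 0; apply intvl_ge1; lia. }
  exists n, m. split; auto. split; auto. apply (key b k Hb f); auto.
Qed.
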